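(* Let $-1<q<1$ and let $X(t)$ be the centered $q$-Poisson process. Then for every $m\ge0$ and $t>0$ the full stochastic measure $\psi_m(t)=\lim_{\delta(\mathcal I)\to0}\psi_m(t;\mathcal I)$ exists as a limit in the $L^2$-norm with respect to $\mathbb E$, and $\psi_m(t)=C_{q,m}(X(t),t)$.
   Context: $q$-Fock space over $H=L^2(\mathbb R_+,dx)$: the algebraic Fock space $\bigoplus_{k\ge0}H^{\otimes k}$ (vacuum $\Omega$) with inner product $\langle f_1\otimes\cdots\otimes f_k,g_1\otimes\cdots\otimes g_n\rangle_q=\delta_{kn}\sum_{\sigma\in\mathrm{Sym}(n)}q^{i(\sigma)}\prod_j\langle f_j,g_{\sigma(j)}\rangle$ ($i(\sigma)$ = number of inversions), completed to $\mathcal F_q(H)$. For $f\in L^2\cap L^\infty(\mathbb R_+)$: $a^*(f)\Omega=f$, $a^*(f)(g_1\otimes\cdots\otimes g_n)=f\otimes g_1\otimes\cdots\otimes g_n$; $a(f)\Omega=0$, $a(f)(g_1\otimes\cdots\otimes g_n)=\sum_{k=1}^nq^{k-1}\langle f,g_k\rangle g_1\otimes\cdots\widehat{g_k}\cdots\otimes g_n$; $p(f)\Omega=0$, $p(f)(g_1\otimes\cdots\otimes g_n)=\sum_{k=1}^nq^{k-1}(fg_k)\otimes g_1\otimes\cdots\widehat{g_k}\cdots\otimes g_n$ (hat = omitted). The centered $q$-Poisson process is $X(t)=a^*(\mathbf 1_{[0,t)})+a(\mathbf 1_{[0,t)})+p(\mathbf 1_{[0,t)})$. $\mathbb E[A]=\langle\Omega,A\Omega\rangle$,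 $\|A\|_2=\mathbb E[A^*A]^{1/2}$. For a subdivision $\mathcal I=\{[a_i,a_{i+1})\}_{i=1}^N$ of $[0,t)$, $\delta(\mathcal I)=\max_i(a_{i+1}-a_i)$, $X_i=X(a_{i+1})-X(a_i)$, and $\psi_m(t;\mathcal I)=\sum X_{u(1)}\cdots X_{u(m)}$ over all $m$-tuples of pairwise distinct indices $u(j)\in\{1,\dots,N\}$. Let $[0]_q=0$, $[n]_q=1+q+\dots+q^{n-1}$. The polynomials $C_{q,m}(x,t)$ (scaled centered continuous big $q$-Hermite polynomials) are defined by $C_{q,0}=1$, $C_{q,-1}=0$ and $xC_{q,m}(x,t)=C_{q,m+1}(x,t)+[m]_qC_{q,m}(x,t)+t[m]_qC_{q,m-1}(x,t)$. *)

(* Defs.v *)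
From HB Require Import structures.
From mathcomp Require Import all_boot all_order all_algebra all_fingroup.
From mathcomp Require Import all_classical all_reals all_analysis.
Set Implicit Arguments. Unset Strict Implicit. Unset Printing Implicit Defensive.
Import Order.TTheory GRing.Theory Num.Theory.
Local Open Scope ring_scope.

Section QFock.
Variable R : realType.

(* real-valued functions on R (we only use their restriction to R_+) *)
Definition fn := R -> R.
(* simple tensor f_1 (x) ... (x) f_k ; the empty list is the vacuum Omega *)
Definition tens := seq fn.
(* element of the algebraic Fock space: formal finite linear combination *)
Definition vec := seq (R * tens).

Definition fn0 : fn := fun _ => 0.

Definition ip1 (f g : fn) : R :=
  Rintegral lebesgue_measure `[0%R, +oo[%classic (fun x => f x * g x).

Definition inversions n (s : 'S_n) : nat :=
  #|[set p : 'I_n * 'I_n | (p.1 < p.2)%N && (s p.2 < s p.1)%N]|.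

Definition tensip (q : R) (fs gs : tens) : R :=
  if size fs == size gs then
    \sum_(s : 'S_(size fs)) q ^+ inversions s *
       \prod_(j < size fs) ip1 (nth fn0 fs j) (nth fn0 gs (s j))
  else 0.

Definition vip (q : R) (v w : vec) : R :=
  \sum_(a <- v) \sum_(b <- w) a.1 * b.1 * tensip q a.2 b.2.

Definition vnorm (q : R) (v : vec) : R := Num.sqrt (vip q v v).

Definition Omega : vec := [:: (1, [::])].
Definition vscale (c : R) (v : vec) : vec := [seq (c * a.1, a.2) | a <- v].
Definition vadd (v w : vec) : vec := v ++ w.
Definition vsub (v w : vec) : vec := v ++ vscale (-1) w.
Definition vsum (vs : seq vec) : vec := flatten vs.

Definition vmap (op : tens -> vec) (v : vec) : vec :=
  flatten [seq vscale a.1 (op a.2) | a <- v].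

Definition rem_at (k : nat) (fs : tens) : tens := take k fs ++ drop k.+1 fs.

Definition acr (f : fn) (fs : tens) : vec := [:: (1, f :: fs)].
(* a(f): 0-based index k carries q^k (= q^{k-1} in 1-based indexing) *)
Definition ann (q : R) (f : fn) (fs : tens) : vec :=
  [seq (q ^+ k * ip1 f (nth fn0 fs k), rem_at k fs) | k <- iota 0 (size fs)].
Definition pres (q : R) (f : fn) (fs : tens) : vec :=
  [seq (q ^+ k, (fun x => f x * nth fn0 fs k x) :: rem_at k fs)
     | k <- iota 0 (size fs)].

Definition ind0 (t : R) : fn := fun x => if (0 <= x) && (x < t) then 1 else 0.

Definition Xop (q t : R) (v : vec) : vec :=
  vadd (vmap (acr (ind0 t)) v)
       (vadd (vmap (ann q (ind0 t)) v) (vmap (pres q (ind0 t)) v)).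

Definition Xinc (q a b : R) (v : vec) : vec := vsub (Xop q b v) (Xop q a v).

Definition is_subdiv (t : R) (s : seq R) : Prop :=
  [/\ (1 < size s)%N, head 0 s = 0, last 0 s = t & sorted (fun x y => x < y) s].

Definition nintervals (s : seq R) : nat := (size s).-1.

Definition mesh (s : seq R) : R :=
  \big[Num.max/0]_(i < nintervals s) (nth 0 s i.+1 - nth 0 s i).

(* psi_m(t; I) Omega = sum over injective u of X_{u(1)} ... X_{u(m)} Omega *)
Definition psi_vec (q : R) (m : nat) (s : seq R) : vec :=
  vsum (map (fun u : {ffun 'I_m -> 'I_(nintervals s)} =>
               foldr (fun (j : 'I_m) v =>
                        Xinc q (nth 0 s (nat_of_ord (u j)))
                               (nth 0 s (nat_of_ord (u j)).+1) v)
                     Omega (enum 'I_m))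
            (enum [pred u : {ffun 'I_m -> 'I_(nintervals s)} | injectiveb u])).

Definition qint (q : R) (n : nat) : R := \sum_(i < n) q ^+ i.

(* (C_{q,m}(X(t),t) Omega, C_{q,m-1}(X(t),t) Omega), from the recursion
   C_{m+1} = x C_m - [m]_q C_m - t [m]_q C_{m-1} *)
Fixpoint Cpair (q t : R) (m : nat) : vec * vec :=
  match m with
  | 0 => (Omega, [::])
  | m'.+1 => let: (c, cp) := Cpair q t m' in
      (vadd (Xop q t c)
         (vadd (vscale (- qint q m') c) (vscale (- (t * qint q m')) cp)), c)
  end.

Definition C_vec (q t : R) (m : nat) : vec := (Cpair q t m).1.

End QFock.

(* Main.v *)
Require Import Defs.
From HB Require Import structures.
From mathcomp Require Import all_boot all_order all_algebra all_fingroup.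
From mathcomp Require Import all_classical all_reals all_analysis.
From mathcomp Require Import ring lra zify.
Set Implicit Arguments. Unset Strict Implicit. Unset Printing Implicit Defensive.
Import Order.TTheory GRing.Theory Num.Theory.
Local Open Scope ring_scope.

Section Integ.
Local Open Scope classical_set_scope.
Variable R : realType.
Notation mu := (@lebesgue_measure R).
Notation D := (`[0%R, +oo[ : set R).
Lemma mD : measurable D. Proof. exact: measurable_itv. Qed.
Lemma int_ind (a b : R) : mu.-integrable D (EFin \o \1_(`[a, b[)).
Proof. apply: (@integrableS _ _ _ _ setT) => //. exact: integrable_indic_itv. Qed.
Lemma fine_leb (a b : R) : a < b -> fine (@lebesgue_measure R `[a, b[) = b - a.
Proof. move=> ab. rewrite lebesgue_measure_itv /= lte_fin ab /=. done. Qed.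
Lemma Rint_ind (a b : R) : 0 <= a <= b -> Rintegral mu D (\1_(`[a, b[)) = b - a.
Proof.
move=> /andP[a0 ab].
rewrite /Rintegral integral_indic; last exact: measurable_itv.
rewrite setIidl; last first.
  move=> y /=; rewrite !in_itv /= => /andP[ax _]; rewrite andbT; exact: le_trans ax.
have [h|h] := ltP a b.
  exact: fine_leb.
have -> : b = a by apply/eqP; rewrite eq_le ab h.
by rewrite set_itvco0 measure0 subrr.
exact: mD.
Qed.
Lemma Rint_sum n (c a b : nat -> R) : (forall l, (l < n)%N -> 0 <= a l <= b l) ->
  mu.-integrable D (EFin \o (fun x => \sum_(l < n) c l * \1_(`[a l, b l[) x)) /\
  Rintegral mu D (fun x => \sum_(l < n) c l * \1_(`[a l, b l[) x) =
    \sum_(l < n) c l * (b l - a l).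
Proof.
elim: n => [|n ih] hab.
  have E : (fun x : R => \sum_(l < 0) c l * \1_(`[a l, b l[) x) = cst 0.
    by apply/funext => x; rewrite big_ord0.
  rewrite E big_ord0; split.
    apply: (eq_integrable _ (cst 0%E)); [exact: mD| |exact: integrable0].
    by move=> x _ /=.
  by rewrite Rintegral_cst ?mul0r //; exact: mD.
have [ih1 ih2] : mu.-integrable D (EFin \o (fun x => \sum_(l < n) c l * \1_(`[a l, b l[) x)) /\
  Rintegral mu D (fun x => \sum_(l < n) c l * \1_(`[a l, b l[) x) =
    \sum_(l < n) c l * (b l - a l).
  by apply: ih => l hl; apply: hab; exact: ltnW.
have E : (fun x : R => \sum_(l < n.+1) c l * \1_(`[a l, b l[) x) =
   (fun x => \sum_(l < n) c l * \1_(`[a l, b l[) x + c n * \1_(`[a n, b n[) x).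
  by apply/funext => x; rewrite big_ord_recr.
have iZ : mu.-integrable D (EFin \o (fun x => c n * \1_(`[a n, b n[) x)).
  have -> : (EFin \o (fun x => c n * \1_(`[a n, b n[) x)) =
     (fun x => ((c n)%:E * (EFin \o \1_(`[a n, b n[)) x)%E).
    by apply/funext => x /=; rewrite EFinM.
  exact/integrableZl/int_ind.
rewrite E big_ord_recr /=; split.
  have -> : EFin \o (fun x => \sum_(l < n) c l * \1_(`[a l, b l[) x + c n * \1_(`[a n, b n[) x)
   = (EFin \o (fun x => \sum_(l < n) c l * \1_(`[a l, b l[) x)) \+
     (EFin \o (fun x => c n * \1_(`[a n, b n[) x)).
    by apply/funext => x /=; rewrite EFinD.
  exact: integrableD.
rewrite (@RintegralD _ _ _ mu _ _ _ mD ih1 iZ).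
rewrite ih2 (@RintegralZl _ _ _ mu _ _ _ mD (int_ind _ _)).
by rewrite Rint_ind // hab.
Qed.
End Integ.

Section Main.
Variables (R : realType) (q t : R) (s : seq R).
Hypothesis Hs : is_subdiv t s.

Local Notation N := (nintervals s).
Local Notation p i := (nth 0 s i).
Definition dl (l : nat) : R := p l.+1 - p l.
Definition hh (l : nat) (x : R) : R := ind0 (p l.+1) x - ind0 (p l) x.
Definition al (f : fn R) (l : nat) : R := f (p l).
Definition inS (f : fn R) := forall x, f x = \sum_(l < N) al f l * hh l x.

Lemma sizeN : size s = N.+1.
Proof. case: Hs => h1 _ _ _; rewrite /nintervals; case: (size s) h1 => //. Qed.

Lemma p0 : p 0 = 0.
Proof. by case: Hs => _ h _ _; rewrite nth0. Qed.

Lemma pN : p N = t.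
Proof. by case: Hs => _ _ h _; rewrite /nintervals nth_last. Qed.

Lemma p_lt i j : (i < j)%N -> (j <= N)%N -> p i < p j.
Proof.
move=> ij jN; case: Hs => _ _ _ so.
apply: (sorted_ltn_nth lt_trans) => //; rewrite inE sizeN; lia.
Qed.

Lemma p_le i j : (i <= j)%N -> (j <= N)%N -> p i <= p j.
Proof.
rewrite leq_eqVlt => /orP[/eqP-> _|ij jN]; first exact: lexx.
exact: (ltW (p_lt ij jN)).
Qed.

Lemma p_ge0 i : (i <= N)%N -> 0 <= p i.
Proof. by move=> iN; have := p_le (leq0n i) iN; rewrite p0. Qed.

Lemma dl_ge0 l : (l < N)%N -> 0 <= dl l.
Proof. by move=> lN; rewrite /dl subr_ge0; apply: p_le. Qed.

Lemma hh_ind l x : (l < N)%N -> hh l x = \1_(`[p l, p l.+1[) x.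
Proof.
move=> lN; have h0 := p_ge0 (ltnW lN); have h1 := p_lt (ltnSn l) lN.
rewrite indicE /hh /ind0 mem_setE in_itv /=.
case: (leP 0 x) => hx; case: (ltP x (p l)) => ha; case: (ltP x (p l.+1)) => hb /=;
  rewrite ?subrr ?subr0 ?sub0r //; lra.
Qed.

Lemma hh01 l x : (l < N)%N -> hh l x = 0 \/ hh l x = 1.
Proof. by move=> lN; rewrite hh_ind // indicE; case: (_ \in _); [right|left]. Qed.

Lemma hh_mul l l' x : (l < N)%N -> (l' < N)%N ->
  hh l x * hh l' x = (l == l')%:R * hh l x.
Proof.
move=> lN l'N; case: (eqVneq l l') => [<-|ne].
  by rewrite mul1r; case: (hh01 x lN) => ->; rewrite ?mulr0 ?mulr1.
rewrite mul0r !hh_ind // !indicE !mem_setE !in_itv /=.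
wlog lt : l l' lN l'N ne / (l < l')%N.
  move=> H; case: (ltngtP l l') => c; first exact: H.
    by rewrite mulrC; apply: H => //; rewrite eq_sym.
  by move: ne; rewrite c eqxx.
have := p_le lt (ltnW l'N).
case: (leP (p l) x) => ha; case: (ltP x (p l.+1)) => hb;
case: (leP (p l') x) => hc; case: (ltP x (p l'.+1)) => hd /=; rewrite ?mulr0 ?mul0r //; lra.
Qed.

Lemma inS_mul f g : inS f -> inS g -> inS (fun x => f x * g x).
Proof.
move=> hf hg x; rewrite {1}(hf x) {1}(hg x) big_distrl /=.
apply: eq_bigr => l _; rewrite big_distrr /=.
rewrite (bigD1 l) //= big1 ?addr0.
  by rewrite mulrACA hh_mul // eqxx mul1r.
move=> l' ne; rewrite mulrACA hh_mul //.
have -> : (nat_of_ord l == l') = false by apply: negbTE; rewrite eq_sym.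
by rewrite mul0r mulr0.
Qed.

Lemma inS_0 : inS (@fn0 R).
Proof. by move=> x; rewrite big1 // => l _; rewrite /al /fn0 mul0r. Qed.

Lemma ind00 x : ind0 0 x = 0 :> R.
Proof. by rewrite /ind0; case: (leP 0 x) => //= h; rewrite ltNge h. Qed.

Lemma al_ind i l : (i <= N)%N -> (l < N)%N -> al (ind0 (p i)) l = (l < i)%:R.
Proof.
move=> iN lN; rewrite /al /ind0 p_ge0 ?(ltnW lN) //=.
case: (ltnP l i) => h.
  by rewrite (p_lt h iN).
by rewrite ltNge (p_le h (ltnW lN)).
Qed.

Lemma inS_ind i : (i <= N)%N -> inS (ind0 (p i)).
Proof.
move=> iN x; symmetry.
transitivity (\sum_(l < N | (l < i)%N) hh l x).
  rewrite [RHS]big_mkcond /=; apply: eq_bigr => l _.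
  by rewrite al_ind //; case: (l < i)%N; rewrite ?mul1r ?mul0r.
rewrite -(big_ord_widen N (fun l => hh l x)) //.
rewrite -(big_mkord xpredT (fun l => hh l x)).
rewrite (telescope_sumr (fun l => ind0 (p l) x)) //.
by rewrite p0 ind00 subr0.
Qed.

Lemma inS_t : inS (ind0 t).
Proof. by rewrite -pN; apply: inS_ind. Qed.

Lemma ip1_S f g : inS f -> inS g -> ip1 f g = \sum_(l < N) al f l * al g l * dl l.
Proof.
move=> hf hg; rewrite /ip1.
have E : (fun x => f x * g x) =
    (fun x => \sum_(l < N) (al f l * al g l) * \1_(`[p l, p l.+1[%classic) x).
  apply/funext => x; rewrite (inS_mul hf hg x); apply: eq_bigr => l _.
  by rewrite hh_ind.
rewrite E.
have hab : forall l, (l < N)%N -> 0 <= p l <= p l.+1.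
  move=> l lN; rewrite p_ge0 ?(ltnW lN) //=.
  exact: p_le.
by have [_ ->] := @Rint_sum R N (fun l => al f l * al g l) (fun l => p l) (fun l => p l.+1) hab.
Qed.


Lemma sum_dl : \sum_(l < N) dl l = t.
Proof.
rewrite -(big_mkord xpredT dl) /dl (telescope_sumr (fun l => p l)) //.
by rewrite pN p0 subr0.
Qed.

Definition mono (fs : tens R) (w : seq nat) : R := \prod_(x <- zip fs w) al x.1 x.2.
Definition cf (fs : tens R) (w : seq nat) : R := (size fs == size w)%:R * mono fs w.
Definition coef (v : vec R) (w : seq nat) : R := \sum_(a <- v) a.1 * cf a.2 w.
Definition ins (w : seq nat) (k l : nat) := take k w ++ l :: drop k w.
Definition Acr (a : nat -> R) (F : seq nat -> R) (w : seq nat) : R :=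
  if w is i :: w' then a i * F w' else 0.
Definition Ann (a : nat -> R) (F : seq nat -> R) (w : seq nat) : R :=
  \sum_(k < (size w).+1) q ^+ k * \sum_(l < N) a l * dl l * F (ins w k l).
Definition Pres (a : nat -> R) (F : seq nat -> R) (w : seq nat) : R :=
  if w is i :: w' then \sum_(k < (size w').+1) q ^+ k * (a i * F (ins w' k i)) else 0.
Definition Xc a F w := Acr a F w + Ann a F w + Pres a F w.

Fixpoint goodt (fs : tens R) : Prop := if fs is f :: fs' then inS f /\ goodt fs' else True.
Fixpoint goodv (v : vec R) : Prop := if v is a :: v' then goodt a.2 /\ goodv v' else True.

Lemma goodt_nth fs j : goodt fs -> inS (nth (@fn0 R) fs j).
Proof.
elim: fs j => [|f fs ih] [|j] /=; try (by move=> _; exact: inS_0).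
  by case.
by case=> _ /ih.
Qed.

Lemma goodt_cat a b : goodt a -> goodt b -> goodt (a ++ b).
Proof. by elim: a => //= f a ih [hf ha] hb; split => //; exact: ih. Qed.

Lemma goodt_take k fs : goodt fs -> goodt (take k fs).
Proof. by elim: fs k => [|f fs ih] [|k] //= [hf h]; split => //; exact: ih. Qed.

Lemma goodt_drop k fs : goodt fs -> goodt (drop k fs).
Proof. by elim: fs k => [|f fs ih] [|k] //= [hf h]; exact: ih. Qed.

Lemma goodt_rem k fs : goodt fs -> goodt (rem_at k fs).
Proof. by move=> h; apply: goodt_cat; [exact: goodt_take|exact: goodt_drop]. Qed.

Lemma goodv_cat v w : goodv v -> goodv w -> goodv (v ++ w).
Proof. by elim: v => //= a v ih [ha hv] hw; split => //; exact: ih. Qed.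

Lemma goodv_scale c v : goodv v -> goodv (vscale c v).
Proof. by elim: v => //= a v ih [ha hv]; split => //; exact: ih. Qed.

Lemma goodv_vmap op v : (forall fs, goodt fs -> goodv (op fs)) -> goodv v -> goodv (vmap op v).
Proof.
move=> hop; elim: v => //= a v ih [ha hv].
by apply: goodv_cat; [exact/goodv_scale/hop|exact: ih].
Qed.

Lemma goodv_Xop b v : inS (ind0 b) -> goodv v -> goodv (Xop q b v).
Proof.
move=> hg hv; apply: goodv_cat; [|apply: goodv_cat]; apply: goodv_vmap => // fs hfs.
- rewrite /ann; elim: (iota 0 (size fs)) => //= k L ih; split => //.
  exact: goodt_rem.
- rewrite /pres; elim: (iota 0 (size fs)) => //= k L ih; split => //; split.
    by apply: inS_mul => //; exact: goodt_nth.
  exact: goodt_rem.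
Qed.

Lemma coef_cat v w x : coef (v ++ w) x = coef v x + coef w x.
Proof. by rewrite /coef big_cat. Qed.

Lemma coef_scale c v x : coef (vscale c v) x = c * coef v x.
Proof.
rewrite /coef /vscale big_map mulr_sumr; apply: eq_bigr => a _ /=.
by rewrite mulrA.
Qed.

Lemma coef_sub v w x : coef (vsub v w) x = coef v x - coef w x.
Proof. by rewrite /vsub coef_cat coef_scale mulN1r. Qed.

Lemma coef_nil x : coef [::] x = 0.
Proof. by rewrite /coef big_nil. Qed.

Lemma coef_vmap op v x : coef (vmap op v) x = \sum_(a <- v) a.1 * coef (op a.2) x.
Proof.
elim: v => [|a v ih]; first by rewrite /vmap /= coef_nil big_nil.
by rewrite /vmap /= coef_cat coef_scale -/(vmap op v) ih big_cons.
Qed.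

Lemma coef_flatten vs x : coef (vsum vs) x = \sum_(v <- vs) coef v x.
Proof.
elim: vs => [|v vs ih]; first by rewrite /vsum /= coef_nil big_nil.
by rewrite /vsum /= coef_cat -/(vsum vs) ih big_cons.
Qed.

Lemma coef_cons a v : coef (a :: v) = fun w => a.1 * cf a.2 w + coef v w.
Proof. by apply/funext => w; rewrite /coef big_cons. Qed.

Lemma coef_nilE : coef [::] = fun _ => 0.
Proof. by apply/funext => w; rewrite coef_nil. Qed.

Lemma Acr_lin a c F G w : Acr a (fun w => c * F w + G w) w = c * Acr a F w + Acr a G w.
Proof. case: w => [|i w] /=; [by rewrite mulr0 addr0|ring]. Qed.
Lemma Ann_lin a c F G w : Ann a (fun w => c * F w + G w) w = c * Ann a F w + Ann a G w.
Proof.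
rewrite /Ann mulr_sumr -big_split /=; apply: eq_bigr => k _.
rewrite !mulr_sumr -big_split /=; apply: eq_bigr => l _; ring.
Qed.
Lemma Pres_lin a c F G w : Pres a (fun w => c * F w + G w) w = c * Pres a F w + Pres a G w.
Proof.
case: w => [|i w] /=; first by rewrite mulr0 addr0.
rewrite mulr_sumr -big_split /=; apply: eq_bigr => k _; ring.
Qed.
Lemma Acr_0 a w : Acr a (fun _ => 0) w = 0.
Proof. by case: w => //= *; rewrite mulr0. Qed.
Lemma Ann_0 a w : Ann a (fun _ => 0) w = 0.
Proof. by rewrite /Ann big1 // => k _; rewrite big1 ?mulr0 // => l _; rewrite mulr0. Qed.
Lemma Pres_0 a w : Pres a (fun _ => 0) w = 0.
Proof. by case: w => //= i w; rewrite big1 // => k _; rewrite !mulr0. Qed.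

Lemma Xc_coef a v w : Xc a (coef v) w = \sum_(x <- v) x.1 * Xc a (cf x.2) w.
Proof.
elim: v => [|x v ih]; first by rewrite big_nil coef_nilE /Xc Acr_0 Ann_0 Pres_0 !addr0.
rewrite big_cons -ih coef_cons /Xc Acr_lin Ann_lin Pres_lin; ring.
Qed.

Lemma mono_nil w : mono [::] w = 1.
Proof. by rewrite /mono; case: w => [|i w] /=; rewrite big_nil. Qed.
Lemma mono_cons f fs i w : mono (f :: fs) (i :: w) = al f i * mono fs w.
Proof. by rewrite /mono /= big_cons. Qed.
Lemma mono_cat a1 a2 b1 b2 : size a1 = size b1 ->
  mono (a1 ++ a2) (b1 ++ b2) = mono a1 b1 * mono a2 b2.
Proof. by move=> h; rewrite /mono zip_cat // big_cat. Qed.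

Lemma size_ins w k l : size (ins w k l) = (size w).+1.
Proof. by rewrite /ins size_cat /= addnS -size_cat cat_take_drop. Qed.

Lemma size_rem (fs : tens R) k : (k < size fs)%N -> size (rem_at k fs) = (size fs).-1.
Proof. move=> h; rewrite /rem_at size_cat size_take size_drop h; lia. Qed.

Lemma mono_ins fs w k l : size fs = (size w).+1 -> (k <= size w)%N ->
  mono fs (ins w k l) = al (nth (@fn0 R) fs k) l * mono (rem_at k fs) w.
Proof.
move=> hs hk.
have hk' : (k < size fs)%N by rewrite hs.
have st : size (take k fs) = size (take k w) by rewrite !size_take hs ltnS hk; case: ltnP => // h; apply/eqP; rewrite eqn_leq hk h.
rewrite {1}(_ : fs = take k fs ++ nth (@fn0 R) fs k :: drop k.+1 fs); last first.
  by rewrite -drop_nth // cat_take_drop.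
rewrite /ins mono_cat // mono_cons /rem_at.
rewrite -{3}(cat_take_drop k w) mono_cat //; ring.
Qed.

Lemma iota_ord n (F : nat -> R) : \sum_(k <- iota 0 n) F k = \sum_(k < n) F k.
Proof. by rewrite -(big_mkord xpredT F) /index_iota subn0. Qed.

Lemma coef_acr g fs w : coef (acr g fs) w = Acr (al g) (cf fs) w.
Proof.
rewrite /coef /acr big_cons big_nil addr0 mul1r /cf.
case: w => [|i w] /=; first by rewrite mul0r.
by rewrite eqSS mono_cons; ring.
Qed.

Lemma coef_ann g fs w : inS g -> goodt fs -> coef (ann q g fs) w = Ann (al g) (cf fs) w.
Proof.
move=> hg hfs; rewrite /coef /ann big_map /Ann /=.
case: (boolP (size fs == (size w).+1)) => [/eqP hs|hs].
  rewrite iota_ord hs; apply: eq_bigr => k _.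
  rewrite ip1_S //; last exact: goodt_nth.
  have hk : (k < size fs)%N by rewrite hs.
  rewrite /cf (size_rem hk) hs /= eqxx mul1r -mulrA; congr (_ * _).
  rewrite mulr_suml; apply: eq_bigr => l _.
  have hk2 : (k <= size w)%N by rewrite -ltnS.
  by rewrite size_ins eqxx mul1r (mono_ins _ hs hk2); ring.
rewrite big_seq big1; last first.
  move=> k; rewrite mem_iota add0n => /andP[_ hk].
  by rewrite /cf size_rem // (_ : (size fs).-1 == size w = false) ?mul0r ?mulr0 //;
    apply/negbTE; move: hs; apply: contra => /eqP <-; rewrite prednK //; case: (size fs) hk.
rewrite big1 // => k _; rewrite big1 ?mulr0 // => l _.
by rewrite /cf size_ins (negbTE hs) !mul0r mulr0.
Qed.

Lemma coef_pres g fs w : coef (pres q g fs) w = Pres (al g) (cf fs) w.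
Proof.
rewrite /coef /pres big_map /Pres /=.
case: w => [|i w].
  by rewrite big1 // => k _; rewrite /cf /= mul0r mulr0.
case: (boolP (size fs == (size w).+1)) => [/eqP hs|hs].
  rewrite iota_ord hs; apply: eq_bigr => k _.
  have hk : (k < size fs)%N by rewrite hs.
  have hk2 : (k <= size w)%N by rewrite -ltnS.
  rewrite /cf /= (size_rem hk) hs /= eqxx /= mono_cons size_ins eqxx (mono_ins _ hs hk2).
  rewrite /al /= mul1r mul1r; ring.
rewrite big_seq big1; last first.
  move=> k; rewrite mem_iota add0n => /andP[_ hk].
  rewrite /cf /= size_rem // eqSS (_ : (size fs).-1 == size w = false) ?mul0r ?mulr0 //.
  by apply/negbTE; move: hs; apply: contra => /eqP <-; rewrite prednK //; case: (size fs) hk.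
by rewrite big1 // => k _; rewrite /cf size_ins (negbTE hs) !mul0r !mulr0.
Qed.

Lemma coef_Xop b v w : inS (ind0 b) -> goodv v ->
  coef (Xop q b v) w = Xc (al (ind0 b)) (coef v) w.
Proof.
move=> hb hv; rewrite Xc_coef /Xop /vadd !coef_cat !coef_vmap -!big_split /=.
elim: v hv => [_|x v ih [hx hv]]; first by rewrite !big_nil.
rewrite !big_cons ih // coef_acr coef_ann // coef_pres /Xc; ring.
Qed.

Lemma Xc_sub a1 a2 F w : Xc a1 F w - Xc a2 F w = Xc (fun l => a1 l - a2 l) F w.
Proof.
rewrite /Xc /Acr /Ann /Pres; case: w => [|i w] /=.
  rewrite !addr0 !add0r -sumrB; apply: eq_bigr => k _.
  by rewrite -mulrBr -sumrB; congr (_ * _); apply: eq_bigr => l _; ring.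
set A := \sum_(k < _) _; set B := \sum_(k < _) _; set C := \sum_(k < _) _.
set D := \sum_(k < _) _; set E := \sum_(k < _) _; set G := \sum_(k < _) _.
have -> : E = A - C.
  rewrite /E /A /C -sumrB; apply: eq_bigr => k _.
  by rewrite -mulrBr -sumrB; congr (_ * _); apply: eq_bigr => l _; ring.
have -> : G = B - D.
  by rewrite /G /B /D -sumrB; apply: eq_bigr => k _; ring.
ring.
Qed.

Definition wN (w : seq nat) := all (fun i => (i < N)%N) w.

Lemma wN_ins w k l : wN w -> (l < N)%N -> wN (ins w k l).
Proof.
rewrite /wN -{1}(cat_take_drop k w) all_cat => /andP[h1 h2] hl.
by rewrite /ins all_cat /= h1 h2 hl.
Qed.

Lemma Xc_congr a1 a2 F G w : (forall w, wN w -> F w = G w) ->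
  (forall l, (l < N)%N -> a1 l = a2 l) -> wN w -> Xc a1 F w = Xc a2 G w.
Proof.
move=> hF ha hw; rewrite /Xc /Acr /Ann /Pres.
congr (_ + _ + _).
- case: w hw => [|i w] //= /andP[hi hw].
  by rewrite ha // hF.
- apply: eq_bigr => k _; congr (_ * _); apply: eq_bigr => l _.
  by rewrite ha // hF //; apply: wN_ins.
- case: w hw => [|i w] //= /andP[hi hw].
  apply: eq_bigr => k _; rewrite ha // hF //; exact: wN_ins.
Qed.

Lemma coef_Xinc a b v w : inS (ind0 a) -> inS (ind0 b) -> goodv v ->
  coef (Xinc q a b v) w = Xc (fun l => al (ind0 b) l - al (ind0 a) l) (coef v) w.
Proof.
by move=> ha hb hv; rewrite /Xinc coef_sub !coef_Xop // Xc_sub.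
Qed.

Lemma ins_mem w k l : l \in ins w k l.
Proof. by rewrite /ins mem_cat in_cons eqxx orbT. Qed.

Lemma Xc_e i w0 w : i \notin w0 ->
  Xc (fun l => (l == i)%:R) (fun w => (w == w0)%:R) w = (w == i :: w0)%:R.
Proof.
move=> hi; rewrite /Xc /Acr /Ann /Pres.
rewrite big1 ?addr0; last first.
  move=> k _; rewrite big1 ?mulr0 // => l _.
  case: (eqVneq (nat_of_ord l) i) => [e|]; last by rewrite mul0r mul0r.
  case: (eqVneq (ins w k l) w0) => [e2|]; last by rewrite mulr0.
  by move: hi; rewrite -e2 e ins_mem.
case: w => [|j w] /=; first by rewrite addr0.
rewrite big1 ?addr0; last first.
  move=> k _; case: (eqVneq j i) => [e|]; last by rewrite mul0r mulr0.
  case: (eqVneq (ins w k j) w0) => [e2|]; last by rewrite mulr0 mulr0.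
  by move: hi; rewrite -e2 e ins_mem.
by rewrite eqseq_cons; case: (j == i); case: (w == w0); rewrite /= ?mulr1 ?mulr0 ?mul1r ?mul0r.
Qed.


Lemma Xc_ones m w :
  Xc (fun _ => 1) (fun w => (size w == m)%:R) w =
  (size w == m.+1)%:R + ((size w).+1 == m)%:R * (qint q m * t) + (size w == m)%:R * qint q m.
Proof.
rewrite /Xc /Acr /Ann /Pres; congr (_ + _ + _).
- by case: w => [|j w] /=; rewrite ?mul1r ?eqSS.
- case: (eqVneq (size w).+1 m) => [<-|ne].
    rewrite mul1r /qint mulr_suml; apply: eq_bigr => k _; congr (_ * _).
    rewrite -sum_dl; apply: eq_bigr => l _; by rewrite size_ins eqxx mul1r mulr1.
  rewrite mul0r big1 // => k _; rewrite big1 ?mulr0 // => l _.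
  by rewrite size_ins (negbTE ne) mulr0.
- case: w => [|j w] /=.
    by case: m => [|m]; rewrite /qint ?big_ord0 ?mulr0 ?mul0r.
  case: (eqVneq (size w).+1 m) => [<-|ne].
    rewrite mul1r /qint; apply: eq_bigr => k _; by rewrite size_ins eqxx !mul1r mulr1.
  by rewrite mul0r big1 // => k _; rewrite size_ins (negbTE ne) mulr0 mulr0.
Qed.

Lemma coef_vadd v v' x : coef (vadd v v') x = coef v x + coef v' x.
Proof. exact: coef_cat. Qed.

Lemma coef_Omega w : coef (Omega R) w = (size w == 0)%:R.
Proof. by rewrite /coef /Omega big_cons big_nil addr0 mul1r /cf mono_nil mulr1 eq_sym. Qed.

Lemma al_t l : (l < N)%N -> al (ind0 t) l = 1.
Proof. by move=> hl; rewrite -pN al_ind // hl. Qed.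

Lemma coef_C m : (goodv (Cpair q t m).1 /\ goodv (Cpair q t m).2) /\
  (forall w, wN w -> coef (Cpair q t m).1 w = (size w == m)%:R /\
     coef (Cpair q t m).2 w = (if m is m'.+1 then (size w == m')%:R else 0)).
Proof.
elim: m => [|m [[gc gcp] ih]].
  by split => // w _; rewrite /= coef_Omega coef_nil.
rewrite [Cpair q t m.+1]/=.
move: gc gcp ih; case: (Cpair q t m) => c cp /= gc gcp ih.
split.
  split => //; rewrite /vadd; apply: goodv_cat; first exact: goodv_Xop inS_t gc.
  by apply: goodv_cat; apply: goodv_scale.
move=> w hw; split; last by have [-> _] := ih w hw.
rewrite coef_vadd coef_Xop; last exact: gc; last exact: inS_t.
rewrite coef_vadd !coef_scale.
rewrite (@Xc_congr _ (fun _ => 1) _ (fun w => (size w == m)%:R)) //; first last.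
- exact: al_t.
- by move=> w' hw'; have [-> _] := ih w' hw'.
have [e1 e2] := ih w hw.
rewrite Xc_ones e1 e2; case: m {ih e1 e2 gc gcp c cp} => [|m] /=.
  ring.
rewrite eqSS; ring.
Qed.

Lemma al_e i l : (i < N)%N -> (l < N)%N ->
  al (ind0 (p i.+1)) l - al (ind0 (p i)) l = (l == i)%:R.
Proof.
move=> hi hl; rewrite !al_ind // ?(ltnW hi) //.
rewrite ltnS leq_eqVlt; case: (eqVneq l i) => [->|ne] /=.
  by rewrite ltnn subr0.
by rewrite subrr.
Qed.

Lemma coef_fold m (u : {ffun 'I_m -> 'I_N}) (L : seq 'I_m) :
  uniq [seq nat_of_ord (u j) | j <- L] ->
  let V := foldr (fun (j : 'I_m) v => Xinc q (nth 0 s (nat_of_ord (u j)))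
                        (nth 0 s (nat_of_ord (u j)).+1) v) (Omega R) L in
  goodv V /\ forall w, wN w -> coef V w = (w == [seq nat_of_ord (u j) | j <- L])%:R.
Proof.
elim: L => [|j L ih] /=.
  by move=> _; split => // w _; rewrite coef_Omega size_eq0.
move=> /andP[hn hu]; have [gV cV] := ih hu.
have hi := ltn_ord (u j).
have i1 : inS (ind0 (p (u j))) by apply: inS_ind; exact: ltnW.
have i2 : inS (ind0 (p (u j).+1)) by apply: inS_ind.
split.
  by rewrite /Xinc /vsub; apply: goodv_cat; [exact: goodv_Xop|apply: goodv_scale; exact: goodv_Xop].
move=> w hw; rewrite coef_Xinc //.
rewrite (@Xc_congr _ (fun l => (l == u j)%:R) _ (fun w => (w == [seq nat_of_ord (u j) | j <- L])%:R)) //.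
- exact: Xc_e.
- by move=> l hl; rewrite al_e.
Qed.

Definition word k (w : {ffun 'I_k -> 'I_N}) : seq nat := [seq nat_of_ord (w j) | j <- enum 'I_k].

Lemma coef_psi m w : wN w ->
  coef (psi_vec q m s) w = \sum_(u <- enum [pred u : {ffun 'I_m -> 'I_N} | injectiveb u])
     (w == word u)%:R.
Proof.
move=> hw; rewrite /psi_vec coef_flatten big_map; apply: eq_big_seq => u.
rewrite mem_enum inE => hu.
have hU : uniq [seq nat_of_ord (u j) | j <- enum 'I_m].
  rewrite map_inj_uniq ?enum_uniq // => a b /val_inj; exact/injectiveP.
by have [_ ->] := @coef_fold m u (enum 'I_m) hU.
Qed.

Lemma goodv_vsum_map (T : Type) (F : T -> vec R) (l : seq T) :
  (forall x, goodv (F x)) -> goodv (vsum (map F l)).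
Proof. by move=> h; elim: l => //= x l ih; apply: goodv_cat. Qed.

Lemma goodv_psi m : goodv (psi_vec q m s).
Proof.
rewrite /psi_vec; apply: goodv_vsum_map => u.
elim: (enum 'I_m) => [|j L ihL] //=.
have hi := ltn_ord (u j).
have i1 : inS (ind0 (p (u j))) by apply: inS_ind; exact: ltnW.
have i2 : inS (ind0 (p (u j).+1)) by apply: inS_ind.
by rewrite /Xinc /vsub; apply: goodv_cat; [exact: goodv_Xop|apply: goodv_scale; exact: goodv_Xop].
Qed.

Definition Bk (k : nat) (F G : seq nat -> R) : R :=
  \sum_(sg : 'S_k) q ^+ inversions sg *
    \sum_(w : {ffun 'I_k -> 'I_N})
       F (word w) * G (word [ffun j => w (sg^-1 j)%g]) * \prod_(j < k) dl (w j).

Lemma size_word k (w : {ffun 'I_k -> 'I_N}) : size (word w) = k.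
Proof. by rewrite /word size_map size_enum_ord. Qed.

Lemma nth_word k (w : {ffun 'I_k -> 'I_N}) (j : 'I_k) : nth 0%N (word w) j = w j.
Proof. by rewrite /word (nth_map j) ?size_enum_ord // nth_ord_enum. Qed.

Lemma wN_word k (w : {ffun 'I_k -> 'I_N}) : wN (word w).
Proof. by rewrite /wN /word all_map; apply/allP => j _ /=. Qed.

Lemma mono_ord n fs ws : size fs = n -> size ws = n ->
  mono fs ws = \prod_(j < n) al (nth (@fn0 R) fs j) (nth 0%N ws j).
Proof.
elim: fs ws n => [|f fs ih] [|i ws] [|n] //= h1 h2.
  by rewrite mono_nil big_ord0.
rewrite mono_cons big_ord_recl /=; congr (_ * _).
by rewrite (ih ws n); case: h1; case: h2.
Qed.

Lemma cf_word fs k (w : {ffun 'I_k -> 'I_N}) :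
  cf fs (word w) = (size fs == k)%:R * \prod_(j < k) al (nth (@fn0 R) fs j) (w j).
Proof.
rewrite /cf size_word; case: (eqVneq (size fs) k) => [e|]; last by rewrite !mul0r.
rewrite (@mono_ord k) ?size_word //; congr (_ * _); apply: eq_bigr => j _.
by rewrite nth_word.
Qed.

Lemma Bk_cf k fs gs : goodt fs -> goodt gs ->
  Bk k (cf fs) (cf gs) = ((size fs == k) && (size gs == k))%:R * tensip q fs gs.
Proof.
move=> hf hg.
case: (boolP ((size fs == k) && (size gs == k))) => [/andP[/eqP e1 /eqP e2]|ne]; last first.
  rewrite mul0r /Bk big1 // => sg _; rewrite big1 ?mulr0 // => w _.
  by rewrite !cf_word; move: ne; rewrite negb_and => /orP[] /negbTE ->;
    rewrite /= !mul0r ?mulr0 ?mul0r.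
rewrite /= mul1r /tensip e1 e2 eqxx /Bk; apply: eq_bigr => sg _; congr (_ * _).
symmetry; transitivity (\prod_(j < k) \sum_(l < N) (al (nth (@fn0 R) fs j) l *
    al (nth (@fn0 R) gs (sg j)) l * dl l)).
  apply: eq_bigr => j _; rewrite ip1_S //; exact: goodt_nth.
rewrite bigA_distr_bigA /=; apply: eq_bigr => w _.
rewrite !cf_word e1 e2 eqxx !mul1r !big_split /=; congr (_ * _); congr (_ * _).
rewrite [RHS](reindex_inj (@perm_inj _ sg)); apply: eq_bigr => j _.
by rewrite ffunE permK.
Qed.

Lemma sumBk_cf K fs gs : goodt fs -> goodt gs -> (size fs < K)%N ->
  \sum_(k < K) Bk k (cf fs) (cf gs) = tensip q fs gs.
Proof.
move=> hf hg hK.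
rewrite (eq_bigr (fun k : 'I_K => ((size fs == k) && (size gs == k))%:R * tensip q fs gs));
  last by move=> k _; apply: Bk_cf.
rewrite (bigD1 (Ordinal hK)) //= big1 ?addr0; last first.
  move=> k /eqP ne; case: (eqVneq (size fs) k) => [e|_]; last by rewrite mul0r.
  by case: ne; apply: val_inj; rewrite /= e.
rewrite eqxx /=; case: (boolP (size gs == size fs)) => [_|ne].
  by rewrite mul1r.
by rewrite mul0r /tensip eq_sym (negbTE ne).
Qed.

Lemma Bk_linl k c F1 F2 G : Bk k (fun w => c * F1 w + F2 w) G = c * Bk k F1 G + Bk k F2 G.
Proof.
rewrite /Bk mulr_sumr -big_split; apply: eq_bigr => sg _ /=.
rewrite !mulr_sumr -big_split; apply: eq_bigr => w _ /=; ring.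
Qed.
Lemma Bk_linr k c F G1 G2 : Bk k F (fun w => c * G1 w + G2 w) = c * Bk k F G1 + Bk k F G2.
Proof.
rewrite /Bk mulr_sumr -big_split; apply: eq_bigr => sg _ /=.
rewrite !mulr_sumr -big_split; apply: eq_bigr => w _ /=; ring.
Qed.
Lemma Bk_0l k G : Bk k (fun _ => 0) G = 0.
Proof. by rewrite /Bk big1 // => sg _; rewrite big1 ?mulr0 // => w _; rewrite !mul0r. Qed.
Lemma Bk_0r k F : Bk k F (fun _ => 0) = 0.
Proof. by rewrite /Bk big1 // => sg _; rewrite big1 ?mulr0 // => w _; rewrite mulr0 mul0r. Qed.

Lemma Bk_coefl k v G : Bk k (coef v) G = \sum_(x <- v) x.1 * Bk k (cf x.2) G.
Proof.
elim: v => [|x v ih]; first by rewrite coef_nilE Bk_0l big_nil.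
by rewrite coef_cons Bk_linl ih big_cons.
Qed.
Lemma Bk_coefr k F v : Bk k F (coef v) = \sum_(x <- v) x.1 * Bk k F (cf x.2).
Proof.
elim: v => [|x v ih]; first by rewrite coef_nilE Bk_0r big_nil.
by rewrite coef_cons Bk_linr ih big_cons.
Qed.

Definition allsz (v : vec R) K := all (fun a : R * tens R => (size a.2 < K)%N) v.

Lemma vip_B K v v' : goodv v -> goodv v' -> allsz v K -> allsz v' K ->
  vip q v v' = \sum_(k < K) Bk k (coef v) (coef v').
Proof.
move=> gv gv' sv sv'.
under eq_bigr do rewrite Bk_coefl.
rewrite exchange_big /= /vip.
elim: v gv sv => [|x v ih] /=; first by rewrite !big_nil.
move=> [gx gv] /andP[sx sv].
rewrite !big_cons ih //; congr (_ + _).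
rewrite -mulr_sumr.
rewrite [in RHS](eq_bigr (fun i : 'I_K => \sum_(y <- v') y.1 * Bk i (cf x.2) (cf y.2)));
  last by move=> i _; rewrite Bk_coefr.
rewrite exchange_big /= mulr_sumr.
elim: v' gv' sv' {ih} => [|y v' ih] /=; first by rewrite !big_nil.
move=> [gy gv'] /andP[sy sv'].
rewrite !big_cons ih //; congr (_ + _).
by rewrite -mulr_sumr sumBk_cf // mulrA.
Qed.

Definition maxsz (v : vec R) : nat := foldr (fun a n => maxn (size a.2) n) 0%N v.

Lemma allsz_max v K : (maxsz v < K)%N -> allsz v K.
Proof.
elim: v => //= a v ih h; apply/andP; split.
  by apply: leq_ltn_trans h; exact: leq_maxl.
by apply: ih; apply: leq_ltn_trans h; exact: leq_maxr.
Qed.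

Lemma word_inj k (w1 w2 : {ffun 'I_k -> 'I_N}) : word w1 = word w2 -> w1 = w2.
Proof.
move=> h; apply/ffunP => j; apply: val_inj.
by have := congr1 (fun s => nth 0%N s j) h; rewrite /= !nth_word.
Qed.

Lemma inj_perm k (w : {ffun 'I_k -> 'I_N}) (sg : 'S_k) :
  injectiveb [ffun j => w (sg^-1 j)%g] = injectiveb w.
Proof.
apply/injectiveP/injectiveP => h x y e.
  apply: (@perm_inj _ sg); apply: h; rewrite !ffunE !permK; exact: e.
move: e; rewrite !ffunE => /h; exact: perm_inj.
Qed.

Section Fixm.
Variable m : nat.
Local Notation V := (vsub (psi_vec q m s) (C_vec q t m)).

Lemma goodV : goodv V.
Proof.
rewrite /vsub; apply: goodv_cat; first exact: goodv_psi.
by apply: goodv_scale; have [[] ] := coef_C m.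
Qed.

Lemma coefV k (w : {ffun 'I_k -> 'I_N}) : coef V (word w) =
  \sum_(u <- enum [pred u : {ffun 'I_m -> 'I_N} | injectiveb u]) (word w == word u)%:R
   - (k == m)%:R.
Proof.
rewrite coef_sub coef_psi ?wN_word //; congr (_ - _).
by have [_ h] := coef_C m; have [-> _] := h _ (wN_word w); rewrite size_word.
Qed.

Lemma coefV_ne k (w : {ffun 'I_k -> 'I_N}) : k != m -> coef V (word w) = 0.
Proof.
move=> ne; rewrite coefV (negbTE ne) subr0 big1 // => u _.
case: (eqVneq (word w) (word u)) => // e.
by move: ne; rewrite -(size_word w) e size_word eqxx.
Qed.

Lemma coefV_m (w : {ffun 'I_m -> 'I_N}) : coef V (word w) = (injectiveb w)%:R - 1.
Proof.
rewrite coefV eqxx big_enum /=; congr (_ - _).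
case: (boolP (injectiveb w)) => hw.
  rewrite (bigD1 w) ?inE //= eqxx big1 ?addr0 // => u /andP[_ ne].
  case: (eqVneq (word w) (word u)) => // /word_inj e.
  by move: ne; rewrite e eqxx.
rewrite big1 // => u hu; case: (eqVneq (word w) (word u)) => // /word_inj e.
by move: hw; rewrite e; rewrite inE in hu; rewrite hu.
Qed.

Definition Nm := \sum_(w : {ffun 'I_m -> 'I_N}) (~~ injectiveb w)%:R * \prod_(j < m) dl (w j).

Lemma vip_V : vip q V V = (\sum_(sg : 'S_m) q ^+ inversions sg) * Nm.
Proof.
set K := (maxn (maxsz V) m).+1.
have sK : allsz V K by apply: allsz_max; rewrite ltnS leq_maxl.
have mK : (m < K)%N by rewrite ltnS leq_maxr.
rewrite (vip_B goodV goodV sK sK) (bigD1 (Ordinal mK)) //= big1 ?addr0; last first.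
  move=> k /eqP ne; rewrite /Bk big1 // => sg _; rewrite big1 ?mulr0 // => w _.
  rewrite coefV_ne ?mul0r //; apply/eqP => e; apply: ne; exact: val_inj.
rewrite /Bk mulr_suml; apply: eq_bigr => sg _; congr (_ * _).
apply: eq_bigr => w _; rewrite !coefV_m inj_perm; congr (_ * _).
by case: (injectiveb w) => /=; rewrite ?subrr ?mul0r // sub0r mulrNN mul1r.
Qed.

Lemma Nm_ge0 : 0 <= Nm.
Proof.
apply: sumr_ge0 => w _; apply: mulr_ge0; first by case: (~~ _).
by apply: prodr_ge0 => j _; apply: dl_ge0.
Qed.

Lemma vip_le_Nm : `|q| <= 1 -> vip q V V <= #|'S_m|%:R * Nm.
Proof.
move=> hq; rewrite vip_V.
apply: le_trans (ler_norm _) _; rewrite normrM (ger0_norm Nm_ge0).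
apply: ler_wpM2r; first exact: Nm_ge0.
apply: le_trans (ler_norm_sum _ _ _) _.
rewrite -sumr_const; apply: ler_sum => sg _.
by rewrite normrX; apply: exprn_ile1.
Qed.

Lemma t_ge0 : 0 <= t.
Proof. by rewrite -pN; apply: p_ge0. Qed.

Lemma dl_mesh l : (l < N)%N -> dl l <= mesh s.
Proof. by move=> lN; rewrite /mesh (bigD1 (Ordinal lN)) //= le_max /dl lexx. Qed.

Lemma prod_const_ord n (x : R) : \prod_(i < n) x = x ^+ n.
Proof. by elim: n => [|n ih]; rewrite ?big_ord0 ?expr0 // big_ord_recr ih exprSr. Qed.

Lemma sum_const_ord n (x : R) : \sum_(i < n) x = n%:R * x.
Proof. by elim: n => [|n ih]; rewrite ?big_ord0 ?mul0r // big_ord_recr ih mulrSr mulrDl mul1r. Qed.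

Lemma prod_sub_le (P : pred 'I_m) (c : 'I_m -> R) : (forall j, 0 <= c j <= 1 + t) ->
  \prod_(j < m | P j) c j <= (1 + t) ^+ m.
Proof.
move=> hc; have ht := t_ge0.
apply: (@le_trans _ _ (\prod_(j < m | P j) (1 + t))).
  by apply: ler_prod => j _; exact: hc.
rewrite -prod_const_ord big_mkcond /=; apply: ler_prod => j _.
by case: ifP => _; apply/andP; split; lra.
Qed.

Lemma pair_bound (j1 j2 : 'I_m) : j1 != j2 ->
  \sum_(w : {ffun 'I_m -> 'I_N}) (w j1 == w j2)%:R * \prod_(j < m) dl (w j)
   <= t * (mesh s * (1 + t) ^+ m).
Proof.
move=> ne.
pose phi (l : 'I_N) (j : 'I_m) (x : 'I_N) : R :=
  dl x * (if (j == j1) || (j == j2) then (x == l)%:R else 1).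
have E : forall w : {ffun 'I_m -> 'I_N},
  (w j1 == w j2)%:R * \prod_(j < m) dl (w j) = \sum_(l < N) \prod_(j < m) phi l j (w j).
  move=> w.
  have ifs : forall l : 'I_N, \prod_(j < m) (if (j == j1) || (j == j2) then (w j == l)%:R else 1 : R)
      = (w j1 == l)%:R * (w j2 == l)%:R.
    move=> l; rewrite (bigD1 j1) //= eqxx /= (bigD1 j2) /=; last by rewrite eq_sym.
    rewrite eqxx orbT big1 ?mulr1 // => j /andP[n1 n2].
    by rewrite (negbTE n1) (negbTE n2).
  rewrite (eq_bigr (fun l : 'I_N => \prod_(j < m) dl (w j) * ((w j1 == l)%:R * (w j2 == l)%:R)));
    last by move=> l _; rewrite /phi big_split /= ifs.
  rewrite -mulr_sumr mulrC; congr (_ * _).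
  rewrite (bigD1 (w j1)) //= eqxx mul1r big1 ?addr0; last first.
    by move=> l ne'; rewrite eq_sym (negbTE ne') mul0r.
  by rewrite eq_sym.
rewrite (eq_bigr _ (fun w _ => E w)) exchange_big /=.
have D : forall l : 'I_N, \sum_(w : {ffun 'I_m -> 'I_N}) \prod_(j < m) phi l j (w j)
    = \prod_(j < m) \sum_(x < N) phi l j x.
  by move=> l; rewrite bigA_distr_bigA.
rewrite (eq_bigr _ (fun l _ => D l)).
apply: (@le_trans _ _ (\sum_(l < N) dl l * (mesh s * (1 + t) ^+ m)));
  last by rewrite -mulr_suml sum_dl.
apply: ler_sum => l _.
have c1 : forall j : 'I_m, (j == j1) || (j == j2) -> \sum_(x < N) phi l j x = dl l.
  move=> j h; rewrite /phi h (bigD1 l) //= eqxx mulr1 big1 ?addr0 // => x ne'.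
  by rewrite (negbTE ne') mulr0.
have c2 : forall j : 'I_m, ~~ ((j == j1) || (j == j2)) -> \sum_(x < N) phi l j x = t.
  move=> j /negbTE h; rewrite -sum_dl; apply: eq_bigr => x _; by rewrite /phi h mulr1.
have hdl : 0 <= dl l by apply: dl_ge0.
have cb : forall j, 0 <= \sum_(x < N) phi l j x <= 1 + t.
  move=> j; case: (boolP ((j == j1) || (j == j2))) => h.
    rewrite c1 // hdl /=; have := dl_mesh (ltn_ord l); have := t_ge0.
    have : dl l <= t by rewrite -sum_dl (bigD1 l) //= lerDl; apply: sumr_ge0 => x _; apply: dl_ge0.
    lra.
  by rewrite c2 // t_ge0 /=; lra.
rewrite (bigD1 j1) //= c1 ?eqxx //; apply: ler_wpM2l => //.
rewrite (bigD1 j2) /=; last by rewrite eq_sym.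
rewrite c1 ?eqxx ?orbT //; apply: ler_pM => //.
- by apply: prodr_ge0 => j _; have /andP[] := cb j.
- exact: dl_mesh.
- by apply: prod_sub_le.
Qed.

Lemma N_gt0 : (0 < N)%N.
Proof. by case: Hs => h _ _ _; rewrite /nintervals; case: (size s) h => // [[]]. Qed.

Lemma mesh_ge0 : 0 <= mesh s.
Proof. exact: le_trans (dl_ge0 N_gt0) (dl_mesh N_gt0). Qed.

Lemma P_ge0 (w : {ffun 'I_m -> 'I_N}) : 0 <= \prod_(j < m) dl (w j).
Proof. by apply: prodr_ge0 => j _; apply: dl_ge0. Qed.

Lemma term_le (w : {ffun 'I_m -> 'I_N}) :
  (~~ injectiveb w)%:R * \prod_(j < m) dl (w j) <=
  \sum_(j1 < m) \sum_(j2 < m | j2 != j1) (w j1 == w j2)%:R * \prod_(j < m) dl (w j).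
Proof.
have hP := P_ge0 w.
have g0 : forall (j1 j2 : 'I_m), 0 <= (w j1 == w j2)%:R * \prod_(j < m) dl (w j).
  by move=> j1 j2; apply: mulr_ge0.
case: (boolP (injectiveb w)) => hw /=.
  by rewrite mul0r; apply: sumr_ge0 => j1 _; apply: sumr_ge0 => j2 _.
have [x [y ne e]] := injectivePn _ hw.
rewrite [X in _ <= X](bigD1 x) //= [X in _ <= X + _](bigD1 y) /=; last by rewrite eq_sym.
rewrite mul1r e eqxx mul1r.
have r1 : 0 <= \sum_(j2 < m | (j2 != x) && (j2 != y)) (w x == w j2)%:R * \prod_(j < m) dl (w j).
  by apply: sumr_ge0.
have r2 : 0 <= \sum_(j1 < m | j1 != x) \sum_(j2 < m | j2 != j1) (w j1 == w j2)%:R * \prod_(j < m) dl (w j).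
  by apply: sumr_ge0 => j1 _; apply: sumr_ge0.
rewrite e in r1; lra.
Qed.

Lemma Nm_bound : Nm <= m%:R * (m%:R * (t * (mesh s * (1 + t) ^+ m))).
Proof.
set B := t * (mesh s * (1 + t) ^+ m).
have hB : 0 <= B.
  apply: mulr_ge0; first exact: t_ge0.
  apply: mulr_ge0; first exact: mesh_ge0.
  by apply: exprn_ge0; have := t_ge0; lra.
apply: (@le_trans _ _ (\sum_(w : {ffun 'I_m -> 'I_N}) \sum_(j1 < m) \sum_(j2 < m | j2 != j1)
   (w j1 == w j2)%:R * \prod_(j < m) dl (w j))).
  by apply: ler_sum => w _; apply: term_le.
rewrite exchange_big /=.
apply: (@le_trans _ _ (\sum_(j1 < m) \sum_(j2 < m) B)).
  apply: ler_sum => j1 _; rewrite exchange_big /=.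
  rewrite [X in _ <= X]big_mkcond /=; rewrite [X in X <= _]big_mkcond /=.
  apply: ler_sum => j2 _; case: ifP => h; last by [].
  by apply: pair_bound; rewrite eq_sym.
by rewrite !sum_const_ord.
Qed.
End Fixm.
End Main.

Unset Implicit Arguments.

Theorem proposition5p5 (R : realType) (q : R) :
  -1 < q < 1 ->
  forall (m : nat) (t : R), 0 < t ->
  forall eps : R, 0 < eps ->
  exists2 delta : R, 0 < delta &
    forall s : seq R, is_subdiv t s -> mesh s < delta ->
      vnorm q (vsub (psi_vec q m s) (C_vec q t m)) < eps.
Proof.
move=> /andP[q1 q2] m t t0 eps e0.
set C : R := #|'S_m|%:R * (m%:R * (m%:R * (t * (1 + t) ^+ m))).
have C0 : 0 <= C.
  apply: mulr_ge0; first exact: ler0n.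
  apply: mulr_ge0; first exact: ler0n.
  apply: mulr_ge0; first exact: ler0n.
  apply: mulr_ge0; first exact: ltW.
  by apply: exprn_ge0; lra.
have e2 : 0 < eps ^+ 2 by apply: exprn_gt0.
have C1 : 0 < C + 1 by lra.
exists (eps ^+ 2 / (C + 1)); first exact: divr_gt0.
move=> s Hs hm.
have hq : `|q| <= 1 by rewrite ler_norml; apply/andP; split; lra.
have h1 := vip_le_Nm Hs m hq.
have h2 := Nm_bound Hs m.
set v := vip _ _ _ in h1.
have hv : v <= C * mesh s.
  apply: (le_trans h1).
  have -> : C * mesh s = #|'S_m|%:R * (m%:R * (m%:R * (t * (mesh s * (1 + t) ^+ m)))).
    by rewrite /C; ring.
  by apply: ler_wpM2l => //; exact: ler0n.
have hv2 : v < eps ^+ 2.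
  apply: (le_lt_trans hv).
  apply: (@le_lt_trans _ _ (C * (eps ^+ 2 / (C + 1)))).
    by apply: ler_wpM2l => //; exact: ltW.
  rewrite mulrA ltr_pdivrMr //; nra.
rewrite /vnorm -/v -(ger0_norm (ltW e0)) -sqrtr_sqr ltr_sqrt //.
Qed.
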